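(* Assume $\rho_\alpha^{\mathrm{dir}}<1$, and let $\theta^\star$ be the unique projected Bellman fixed point. Fix $\varepsilon>0$ with $\beta_\varepsilon:=\rho_\alpha^{\mathrm{dir}}+\varepsilon<1$, and let $p_\varepsilon$ and $C_\varepsilon$ be as described in the context. Assume additionally that \[ \lambda_\varepsilon:=\beta_\varepsilon+2\alpha\sqrt{C_\varepsilon}(1+\gamma)\phi_{\max}^2<1. \] Let \[ K:=2\alpha\sqrt{C_\varepsilon}\,\phi_{\max}\big(R_{\max}+(1+\gamma)\|\Phi\theta^\star\|_\infty\big). \] Then for all $k\ge0$, with $x_k:=\theta_k-\theta^\star$, we have \[ \mathbb E[p_\varepsilon(x_k)]\le\lambda_\varepsilon^k p_\varepsilon(x_0)+\frac{K}{1-\lambda_\varepsilon}(1-\lambda_\varepsilon^k), \] \[ \mathbb E[\|\theta_k-\theta^\star\|_2]\le\sqrt{C_\varepsilon}\,\lambda_\varepsilon^k\|\theta_0-\theta^\star\|_2+\frac{K}{1-\lambda_\varepsilon}, \] \[ \limsup_{k\to\infty}\mathbb E[\|\theta_k-\theta^\star\|_2]\le\frac{K}{1-\lambda_\varepsilon}, \] \[ \mathbb E[\|\Phi\theta_k-\Phi\theta^\star\|_2]\le\|\Phi\|_2\Big(\sqrt{C_\varepsilon}\lambda_\varepsilon^k\|\theta_0-\theta^\star\|_2+\frac{K}{1-\lambda_\varepsilon}\Big). \]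
   Context: Consider a finite discounted MDP with state space $\mathcal S=\{1,\dots,|\mathcal S|\}$, action space $\mathcal A=\{1,\dots,|\mathcal A|\}$, transition probabilities $P(s'\mid s,a)$, real rewards $r(s,a,s')$, expected reward $R(s,a)=\sum_{s'}P(s'\mid s,a)r(s,a,s')$, and discount factor $\gamma\in(0,1)$. Let $R_{\max}:=\max_{s,a,s'}|r(s,a,s')|$. State-action vectors are ordered as $(1,1),(2,1),\dots,(|\mathcal S|,1),(1,2),\dots$. The matrix $P\in\mathbb R^{|\mathcal S||\mathcal A|\times|\mathcal S|}$ has rows $P(\cdot\mid s,a)$, and $R$ is the vector with entries $R(s,a)$. The set $\Theta$ is the finite set of deterministic stationary policies $\pi:\mathcal S\to\mathcal A$. For $\pi\in\Theta$, $\Pi^\pi\in\mathbb R^{|\mathcal S|\times|\mathcal S||\mathcal A|}$ has entry $1$ at row $s$, column $(s,\pi(s))$, and zeros elsewhere. The feature matrix $\Phi\in\mathbb R^{|\mathcal S||\mathcal A|\times m}$ has full column rank and rows $\phi(s,a)^\top$. Let $\phi_{\max}:=\max_{s,a}\|\phi(s,a)\|_2$, and define $V_\theta(s):=\max_a\phi(s,a)^\top\theta$. The distribution $d$ on $\mathcal S\times\mathcal A$ satisfies $d(s,a)>0$ for all pairs, and $D=\mathrm{diag}(d)$. The step size is $\alpha\in(0,1)$. Define $g(\theta):=\Phi^\top D(R+\gamma PV_\theta-\Phi\theta)$. A projected Bellman fixed point is a $\theta^\star$ with $g(\theta^\star)=0$. For $\pi\in\Theta$, define $A_\pi:=I-\alpha\Phi^\top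 D\Phi+\alpha\gamma\Phi^\top DP\Pi^\pi\Phi$. Let $\rho_\alpha^{\mathrm{dir}}$ be the joint spectral radius $\lim_k\max_{\pi_1,\dots,\pi_k}\|A_{\pi_k}\cdots A_{\pi_1}\|^{1/k}$ of $\{A_\pi:\pi\in\Theta\}$. When $\rho_\alpha^{\mathrm{dir}}<1$, a projected Bellman fixed point exists and is unique. Lyapunov norm: for $\beta_\varepsilon<1$ as in the claim, set \[ V_\varepsilon^\infty(x):=\lim_{t\to\infty}\sum_{\ell=0}^{t}\beta_\varepsilon^{-2\ell}\max_{\pi_1,\dots,\pi_\ell\in\Theta}\|A_{\pi_\ell}\cdots A_{\pi_1}x\|_2^2, \] where the $\ell=0$ term is $\|x\|_2^2$, and set $p_\varepsilon:=\sqrt{V_\varepsilon^\infty}$ (a norm). Let $C_\varepsilon\ge1$ be a constant with $\|x\|_2^2\le V_\varepsilon^\infty(x)\le C_\varepsilon\|x\|_2^2$ for all $x\in\mathbb R^m$ (such a constant exists). i.i.d. linear Q-learning: $\theta_0\in\mathbb R^m$ is deterministic. At each time $k$, $(s_k,a_k)$ is drawn independently according to $d$, then $s'_k\sim P(\cdot\mid s_k,a_k)$, and $r_{k+1}:=r(s_k,a_k,s'_k)$. The update is \[ \theta_{k+1}=\theta_k+\alpha\phi(s_k,a_k)\Big(r_{k+1}+\gamma\max_{u\in\mathcal A}\phi(s'_k,u)^\top\theta_k-\phi(s_k,a_k)^\top\theta_k\Big). \] *)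

(* Defs.v *)
From HB Require Import structures.
From mathcomp Require Import all_boot all_order all_algebra.
From mathcomp Require Import all_classical all_reals all_analysis.
Set Implicit Arguments. Unset Strict Implicit. Unset Printing Implicit Defensive.
Import Order.TTheory GRing.Theory Num.Theory.
Local Open Scope ring_scope.
Local Open Scope classical_set_scope.

Section QL.
Variable R : realType.

Definition norm2 {n} (x : 'cV[R]_n) : R := Num.sqrt (\sum_i (x i 0) ^+ 2).
Definition dotv {n} (x y : 'cV[R]_n) : R := \sum_i x i 0 * y i 0.
Definition norminf {n} (x : 'cV[R]_n) : R := \big[Num.max/0]_i `|x i 0|.
Definition opnorm2 {p q} (M : 'M[R]_(p, q)) : R :=
  sup [set norm2 (M *m x) | x in [set x : 'cV[R]_q | norm2 x <= 1]].

Variables (nS nA m : nat).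
Notation S := 'I_nS.+1.
Notation A := 'I_nA.+1.
Definition policy := {ffun S -> A}.

(** The feature matrix Phi has rows indexed by state-action pairs, ordered
    (1,1),(2,1),...,(|S|,1),(1,2),...: the pair (s,a) is row a*|S| + s. *)
Definition sa_index (s : S) (a : A) : 'I_(nA.+1 * nS.+1) := mxvec_index a s.
Definition feat (Phi : 'M[R]_(nA.+1 * nS.+1, m)) (s : S) (a : A) : 'cV[R]_m :=
  (row (sa_index s a) Phi)^T.

Variables (P : S -> A -> S -> R) (r : S -> A -> S -> R) (d : S -> A -> R)
  (Phi : 'M[R]_(nA.+1 * nS.+1, m)) (gamma alpha : R).

Definition Rexp (s : S) (a : A) : R := \sum_s' P s a s' * r s a s'.
Definition Rmax : R := \big[Num.max/0]_(s : S) \big[Num.max/0]_(a : A)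
                         \big[Num.max/0]_(s' : S) `|r s a s'|.
Definition phimax : R := \big[Num.max/0]_(s : S) \big[Num.max/0]_(a : A)
                           norm2 (feat Phi s a).
Definition Vth (th : 'cV[R]_m) (s : S) : R :=
  \big[Num.max/dotv (feat Phi s ord0) th]_(u : A) dotv (feat Phi s u) th.

(** g(theta) = Phi^T D (R + gamma P V_theta - Phi theta), written out *)
Definition gfun (th : 'cV[R]_m) : 'cV[R]_m :=
  \sum_(s : S) \sum_(a : A) (d s a * (Rexp s a + gamma * \sum_s' P s a s' * Vth th s'
                                 - dotv (feat Phi s a) th)) *: feat Phi s a.

(** A_pi = I - alpha Phi^T D Phi + alpha gamma Phi^T D P Pi^pi Phi, written out *)
Definition Api (pi : policy) : 'M[R]_m :=
  1%:M - alpha *: (\sum_(s : S) \sum_(a : A) d s a *: (feat Phi s a *m (feat Phi s a)^T))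
  + (alpha * gamma) *: (\sum_(s : S) \sum_(a : A) d s a *:
        (feat Phi s a *m (\sum_(s' : S) P s a s' *: feat Phi s' (pi s'))^T)).

(** A_{pi_k} ... A_{pi_1} for the tuple [pi_1; ...; pi_k] *)
Definition prodA (pis : seq policy) : 'M[R]_m :=
  foldl (fun M pi => Api pi *m M) 1%:M pis.

Definition rho_dir : R :=
  limn (fun k : nat => powR (\big[Num.max/0]_(t : k.-tuple policy) opnorm2 (prodA t))
                            (k%:R^-1)).

Definition Vlyap (beta : R) (x : 'cV[R]_m) : R :=
  limn (fun t : nat => \sum_(0 <= l < t.+1)
          beta ^- (2 * l) * \big[Num.max/0]_(pis : l.-tuple policy)
                               (norm2 (prodA pis *m x)) ^+ 2).
Definition plyap (beta : R) (x : 'cV[R]_m) : R := Num.sqrt (Vlyap beta x).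

Definition sample := (S * A * S)%type.
Definition sample_prob (w : sample) : R := d w.1.1 w.1.2 * P w.1.1 w.1.2 w.2.
Definition qstep (th : 'cV[R]_m) (w : sample) : 'cV[R]_m :=
  let: (s, a, s') := w in
  th + (alpha * (r s a s' + gamma * Vth th s' - dotv (feat Phi s a) th))
         *: feat Phi s a.
Definition qiter (th0 : 'cV[R]_m) (ws : seq sample) : 'cV[R]_m := foldl qstep th0 ws.

Definition Eiter (th0 : 'cV[R]_m) (k : nat) (f : 'cV[R]_m -> R) : R :=
  \sum_(ws : k.-tuple sample)
     (\prod_(i < k) sample_prob (tnth ws i)) * f (qiter th0 ws).

End QL.

(* Main.v *)
Require Import Defs.
From HB Require Import structures.
From mathcomp Require Import all_boot all_order all_algebra.
From mathcomp Require Import all_classical all_reals all_analysis.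
From mathcomp Require Import ring lra.
Import Order.TTheory GRing.Theory Num.Theory.
Local Open Scope ring_scope.

Module Helpers.
Import numFieldNormedType.Exports.
Local Open Scope classical_set_scope.

Section Gen.
Context {R : realType}.

Lemma CS_sum (I : finType) (w a b : I -> R) : (forall i, 0 <= w i) ->
  (\sum_i w i * a i * b i) ^+ 2 <= (\sum_i w i * a i ^+ 2) * (\sum_i w i * b i ^+ 2).
Proof.
move=> w0.
have D0 : 0 <= \sum_i \sum_j w i * w j * (a i * b j - a j * b i) ^+ 2.
  apply: sumr_ge0 => i _; apply: sumr_ge0 => j _.
  apply: mulr_ge0; [apply: mulr_ge0; exact: w0|exact: sqr_ge0].
have E1 : (\sum_i w i * a i ^+ 2) * (\sum_i w i * b i ^+ 2) =
   \sum_i \sum_j (w i * a i ^+ 2) * (w j * b j ^+ 2).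
  by rewrite mulr_suml; apply: eq_bigr => i _; rewrite mulr_sumr.
have E2 : (\sum_i w i * a i ^+ 2) * (\sum_i w i * b i ^+ 2) =
   \sum_i \sum_j (w j * a j ^+ 2) * (w i * b i ^+ 2).
  by rewrite E1 exchange_big.
have E3 : (\sum_i w i * a i * b i) ^+ 2 =
   \sum_i \sum_j (w i * a i * b i) * (w j * a j * b j).
  by rewrite expr2 mulr_suml; apply: eq_bigr => i _; rewrite mulr_sumr.
have E : \sum_i \sum_j w i * w j * (a i * b j - a j * b i) ^+ 2 =
  (\sum_i w i * a i ^+ 2) * (\sum_i w i * b i ^+ 2) *+ 2
   - (\sum_i w i * a i * b i) ^+ 2 *+ 2.
  rewrite mulr2n {1}E1 E2 E3 -big_split /= -sumrMnl -sumrB.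
  apply: eq_bigr => i _; rewrite -big_split /= -sumrMnl -sumrB.
  by apply: eq_bigr => j _; rewrite mulr2n; ring.
move: D0; rewrite E subr_ge0 => H.
by rewrite -(ler_pMn2r (ltn0Sn 1)).
Qed.

Lemma sqrt_le_of (X Y : R) : 0 <= Y -> X <= Y ^+ 2 -> Num.sqrt X <= Y.
Proof.
move=> Y0 XY; rewrite -(ger0_norm Y0) -sqrtr_sqr; exact: ler_wsqrtr.
Qed.

Lemma CS_sum' (I : finType) (w a b : I -> R) : (forall i, 0 <= w i) ->
  \sum_i w i * a i * b i <=
    Num.sqrt (\sum_i w i * a i ^+ 2) * Num.sqrt (\sum_i w i * b i ^+ 2).
Proof.
move=> w0; have A0 : 0 <= \sum_i w i * a i ^+ 2.
  by apply: sumr_ge0 => i _; rewrite mulr_ge0 ?sqr_ge0.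
rewrite -sqrtrM //; apply: le_trans (ler_norm _) _.
rewrite -sqrtr_sqr; apply: ler_wsqrtr; exact: CS_sum.
Qed.

Lemma mink_sum (I : finType) (w a b : I -> R) : (forall i, 0 <= w i) ->
  Num.sqrt (\sum_i w i * (a i + b i) ^+ 2) <=
    Num.sqrt (\sum_i w i * a i ^+ 2) + Num.sqrt (\sum_i w i * b i ^+ 2).
Proof.
move=> w0; have A0 : 0 <= \sum_i w i * a i ^+ 2.
  by apply: sumr_ge0 => i _; rewrite mulr_ge0 ?sqr_ge0.
have B0 : 0 <= \sum_i w i * b i ^+ 2.
  by apply: sumr_ge0 => i _; rewrite mulr_ge0 ?sqr_ge0.
apply: sqrt_le_of; first by rewrite addr_ge0 ?sqrtr_ge0.
have -> : \sum_i w i * (a i + b i) ^+ 2 = \sum_i w i * a i ^+ 2 +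
   (\sum_i w i * a i * b i) *+ 2 + \sum_i w i * b i ^+ 2.
  rewrite -sumrMnl -!big_split /=; apply: eq_bigr => i _; rewrite mulr2n; ring.
rewrite sqrrD !sqr_sqrtr // lerD2r lerD2l lerMn2r /=.
exact: CS_sum'.
Qed.


Section Norm.
Context {n : nat}.
Implicit Types x y : 'cV[R]_n.

Lemma norm2_ge0 x : 0 <= norm2 x. Proof. exact: sqrtr_ge0. Qed.

Lemma sum_sq_ge0 x : 0 <= \sum_i x i 0 ^+ 2.
Proof. by apply: sumr_ge0 => i _; exact: sqr_ge0. Qed.

Lemma norm2_sq x : norm2 x ^+ 2 = \sum_i x i 0 ^+ 2.
Proof. by rewrite /norm2 sqr_sqrtr // sum_sq_ge0. Qed.

Lemma norm2D x y : norm2 (x + y) <= norm2 x + norm2 y.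
Proof.
have E : forall f : 'I_n -> R, \sum_i 1 * f i = \sum_i f i.
  by move=> f; apply: eq_bigr => i _; rewrite mul1r.
have := @mink_sum _ (fun i => 1) (fun i => x i 0) (fun i => y i 0) (fun _ => ler01).
rewrite /norm2 !E.
suff -> : \sum_i (x + y) i 0 ^+ 2 = \sum_i (x i 0 + y i 0) ^+ 2 by [].
by apply: eq_bigr => i _; rewrite mxE.
Qed.

Lemma norm2Z c x : norm2 (c *: x) = `|c| * norm2 x.
Proof.
rewrite /norm2 -sqrtr_sqr -sqrtrM ?sqr_ge0 // mulr_sumr.
by congr Num.sqrt; apply: eq_bigr => i _; rewrite mxE exprMn.
Qed.

Lemma norm2N x : norm2 (- x) = norm2 x.
Proof. by rewrite -scaleN1r norm2Z normrN normr1 mul1r. Qed.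

Lemma norm2_0 : norm2 (0 : 'cV[R]_n) = 0.
Proof. by rewrite -(scale0r 0) norm2Z normr0 mul0r. Qed.

Lemma norm2_eq0 x : norm2 x = 0 -> x = 0.
Proof.
move=> /eqP; rewrite sqrtr_eq0 => H.
have H0 : \sum_i x i 0 ^+ 2 = 0 by apply/eqP; rewrite eq_le H sum_sq_ge0.
have := H0; move/psumr_eq0P => H1.
apply/matrixP => i j; rewrite (ord1 j) mxE.
by apply/eqP; rewrite -sqrf_eq0; apply/eqP; apply: H1 => // k _; exact: sqr_ge0.
Qed.

Lemma dotv_le x y : dotv x y <= norm2 x * norm2 y.
Proof.
have E : forall f : 'I_n -> R, \sum_i 1 * f i = \sum_i f i.
  by move=> f; apply: eq_bigr => i _; rewrite mul1r.
have := @CS_sum' _ (fun i => 1) (fun i => x i 0) (fun i => y i 0) (fun _ => ler01).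
rewrite /norm2 /dotv !E.
suff -> : \sum_i 1 * x i 0 * y i 0 = \sum_i x i 0 * y i 0 by [].
by apply: eq_bigr => i _; rewrite mul1r.
Qed.

Lemma dotv_abs x y : `|dotv x y| <= norm2 x * norm2 y.
Proof.
have [h|h] := lerP 0 (dotv x y); first by rewrite ger0_norm // dotv_le.
rewrite ltr0_norm //.
have -> : - dotv x y = dotv (- x) y.
  by rewrite /dotv -sumrN; apply: eq_bigr => i _; rewrite mxE mulNr.
by rewrite -(norm2N x) dotv_le.
Qed.

Lemma norm2_sum (I : Type) (s : seq I) (Q : pred I) (F : I -> 'cV[R]_n) :
  norm2 (\sum_(i <- s | Q i) F i) <= \sum_(i <- s | Q i) norm2 (F i).
Proof.
apply: (big_ind2 (fun u v => norm2 u <= v)) => //.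
  by rewrite norm2_0.
by move=> a b c e h1 h2; apply: le_trans (norm2D _ _) _; exact: lerD.
Qed.

End Norm.

Lemma trmx_mul_dot (n : nat) (u x : 'cV[R]_n) : u^T *m x = (dotv u x)%:M.
Proof.
apply/matrixP => i j; rewrite (ord1 i) (ord1 j) !mxE /= mulr1n.
by apply: eq_bigr => k _; rewrite mxE.
Qed.

Lemma dotvDr (n : nat) (u x y : 'cV[R]_n) : dotv u (x + y) = dotv u x + dotv u y.
Proof. by rewrite /dotv -big_split; apply: eq_bigr => i _; rewrite mxE mulrDr. Qed.
Lemma dotvBr (n : nat) (u x y : 'cV[R]_n) : dotv u (x - y) = dotv u x - dotv u y.
Proof. by rewrite /dotv -sumrB; apply: eq_bigr => i _; rewrite !mxE mulrBr. Qed.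
Lemma dotvZr (n : nat) (u x : 'cV[R]_n) c : dotv u (c *: x) = c * dotv u x.
Proof. by rewrite /dotv mulr_sumr; apply: eq_bigr => i _; rewrite mxE mulrCA. Qed.

End Gen.

Section Lyap.
Variable R : realType.
Variables (nS nA m : nat).
Variables (P : 'I_nS.+1 -> 'I_nA.+1 -> 'I_nS.+1 -> R) (d : 'I_nS.+1 -> 'I_nA.+1 -> R)
  (Phi : 'M[R]_(nA.+1 * nS.+1, m)) (gamma alpha beta : R).

Local Notation pA := (prodA P d Phi gamma alpha).
Local Notation V := (Vlyap P d Phi gamma alpha beta).

Definition Mx (l : nat) (x : 'cV[R]_m) : R :=
  \big[Num.max/0]_(pis : l.-tuple (policy nS nA)) (norm2 (pA pis *m x)) ^+ 2.
Definition Sx (x : 'cV[R]_m) (t : nat) : R :=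
  \sum_(0 <= l < t.+1) beta ^- (2 * l) * Mx l x.

Lemma VE x : V x = limn (Sx x).
Proof. by []. Qed.

Lemma Mx_ge0 l x : 0 <= Mx l x.
Proof.
rewrite /Mx; elim/big_ind: _ => //.
  by move=> a b a0 b0; rewrite le_max a0.
by move=> i _; exact: sqr_ge0.
Qed.

Lemma w_ge0 l : 0 <= beta ^- (2 * l).
Proof. by rewrite invr_ge0 exprM exprn_ge0 // sqr_ge0. Qed.

Lemma Sx_ge0 x t : 0 <= Sx x t.
Proof. by apply: sumr_ge0 => l _; rewrite mulr_ge0 ?w_ge0 ?Mx_ge0. Qed.

Lemma Sx_nd x : nondecreasing_seq (Sx x).
Proof.
apply/nondecreasing_seqP => t; rewrite /Sx [X in _ <= X]big_nat_recr //= lerDl.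
by rewrite mulr_ge0 ?w_ge0 ?Mx_ge0.
Qed.

Lemma Sx0 t : Sx 0 t = 0.
Proof.
rewrite /Sx big1 // => l _; rewrite /Mx.
suff -> : \big[Num.max/0]_(pis : l.-tuple (policy nS nA)) (norm2 (pA pis *m 0)) ^+ 2 = 0.
  by rewrite mulr0.
elim/big_ind: _ => //; first by move=> a b -> ->; rewrite maxxx.
by move=> i _; rewrite mulmx0 norm2_0 expr0n.
Qed.

Hypothesis Vlow : forall x, norm2 x ^+ 2 <= V x.

Lemma Sx_cvg x : cvgn (Sx x).
Proof.
apply: contrapT => ncv.
have := Vlow x; rewrite VE (dvgP ncv) => h.
have hx : norm2 x = 0.
  by apply/eqP; rewrite -sqrf_eq0 eq_le h sqr_ge0.
move: ncv; rewrite (norm2_eq0 _ hx); apply.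
have -> : Sx 0 = fun _ => 0 by apply: funext => t; exact: Sx0.
exact: is_cvg_cst.
Qed.

Lemma Sx_le_V x t : Sx x t <= V x.
Proof. by rewrite VE; apply: nondecreasing_cvgn_le; [exact: Sx_nd|exact: Sx_cvg]. Qed.

Lemma V_le x b : (forall t, Sx x t <= b) -> V x <= b.
Proof. by move=> h; rewrite VE; apply: limr_le; [exact: Sx_cvg|apply: nearW]. Qed.

Lemma V_ge0 x : 0 <= V x.
Proof. exact: le_trans (Sx_ge0 x 0) (Sx_le_V x 0). Qed.

Lemma prodA_cons pi (pis : seq (policy nS nA)) : pA (pi :: pis) = pA pis *m Api P d Phi gamma alpha pi.
Proof.
rewrite /prodA /= mulmx1.
have : forall M0, foldl (fun M pi => Api P d Phi gamma alpha pi *m M) M0 pis *m Api P d Phi gamma alpha pi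
   = foldl (fun M pi => Api P d Phi gamma alpha pi *m M) (M0 *m Api P d Phi gamma alpha pi) pis.
  elim: pis => [|q s IH] M0 //=; by rewrite IH mulmxA.
by move=> ->; rewrite mul1mx.
Qed.

Lemma contract x y : 0 < beta ->
  (forall l (pis : l.-tuple (policy nS nA)), norm2 (pA pis *m y) ^+ 2 <= Mx l.+1 x) ->
  V y <= beta ^+ 2 * V x.
Proof.
move=> b0 H; apply: V_le => t.
have M1 : forall l, Mx l y <= Mx l.+1 x.
  by move=> l; apply: bigmax_le => //; exact: Mx_ge0.
apply: (@le_trans _ _ (beta ^+ 2 * Sx x t.+1)); last first.
  by rewrite ler_wpM2l ?sqr_ge0 ?Sx_le_V.
rewrite /Sx [X in _ <= _ * X]big_nat_recl // mulrDr mulr_sumr.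
apply: ler_wpDl; first by rewrite mulr_ge0 ?sqr_ge0 ?mulr_ge0 ?w_ge0 ?Mx_ge0.
apply: ler_sum => l _.
rewrite mulrA.
have -> : beta ^+ 2 * beta ^- (2 * l.+1) = beta ^- (2 * l).
  rewrite mulnS exprD invfM mulrA divff ?mul1r // expf_neq0 // gt_eqF //.
by rewrite ler_wpM2l ?w_ge0.
Qed.

Lemma le_sqrt_of (a X : R) : 0 <= a -> a ^+ 2 <= X -> a <= Num.sqrt X.
Proof. by move=> a0 h; rewrite -(ger0_norm a0) -sqrtr_sqr; apply: ler_wsqrtr. Qed.

Lemma triangle x y :
  Num.sqrt (V (x + y)) <= Num.sqrt (V x) + Num.sqrt (V y).
Proof.
apply: sqrt_le_of; first by rewrite addr_ge0 ?sqrtr_ge0.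
apply: V_le => t.
have M1 : forall l, Mx l (x + y) <= (Num.sqrt (Mx l x) + Num.sqrt (Mx l y)) ^+ 2.
  move=> l; apply: bigmax_le; first exact: sqr_ge0.
  move=> pis _; rewrite ler_sqr ?nnegrE ?norm2_ge0 ?addr_ge0 ?sqrtr_ge0 // mulmxDr.
  apply: le_trans (norm2D _ _) _; apply: lerD; apply: le_sqrt_of;
    rewrite ?norm2_ge0 //; exact: (le_bigmax _ _ pis).
have St : Sx (x + y) t <= (Num.sqrt (Sx x t) + Num.sqrt (Sx y t)) ^+ 2.
  have := @mink_sum _ _ (fun l : 'I_t.+1 => beta ^- (2 * l))
     (fun l : 'I_t.+1 => Num.sqrt (Mx l x)) (fun l : 'I_t.+1 => Num.sqrt (Mx l y))
     (fun l => w_ge0 l).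
  have E : forall z, \sum_(i < t.+1) beta ^- (2 * i) * Num.sqrt (Mx i z) ^+ 2 = Sx z t.
    by move=> z; rewrite /Sx big_mkord; apply: eq_bigr => i _; rewrite sqr_sqrtr ?Mx_ge0.
  rewrite !E => h.
  apply: le_trans (_ : _ <= Num.sqrt (\sum_(i < t.+1) beta ^- (2 * i) *
      (Num.sqrt (Mx i x) + Num.sqrt (Mx i y)) ^+ 2) ^+ 2) _.
    rewrite sqr_sqrtr; last by apply: sumr_ge0 => i _; rewrite mulr_ge0 ?w_ge0 ?sqr_ge0.
    by rewrite /Sx big_mkord; apply: ler_sum => i _; rewrite ler_wpM2l ?w_ge0.
  by rewrite ler_sqr ?nnegrE ?sqrtr_ge0 ?addr_ge0 ?sqrtr_ge0.
apply: le_trans St _; rewrite ler_sqr ?nnegrE ?addr_ge0 ?sqrtr_ge0 //.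
by apply: lerD; apply: ler_wsqrtr; exact: Sx_le_V.
Qed.

End Lyap.

Section Step.
Variable R : realType.
Variables (nS nA m : nat).
Variables (P : 'I_nS.+1 -> 'I_nA.+1 -> 'I_nS.+1 -> R) (r : 'I_nS.+1 -> 'I_nA.+1 -> 'I_nS.+1 -> R)
  (d : 'I_nS.+1 -> 'I_nA.+1 -> R)
  (Phi : 'M[R]_(nA.+1 * nS.+1, m)) (gamma alpha : R).
Local Notation S := 'I_nS.+1.
Local Notation A := 'I_nA.+1.
Local Notation phi := (feat Phi).

Lemma dot_feat s a th : dotv (phi s a) th = (Phi *m th) (sa_index s a) 0.
Proof. by rewrite /dotv mxE; apply: eq_bigr => k _; rewrite !mxE. Qed.

Lemma norminf_ge (n : nat) (u : 'cV[R]_n) i : `|u i 0| <= norminf u.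
Proof. exact: (le_bigmax _ _ i). Qed.

Lemma norminf_ge0 (n : nat) (u : 'cV[R]_n) : 0 <= norminf u.
Proof. by rewrite /norminf; elim/big_ind: _ => // a b a0 b0; rewrite le_max a0. Qed.

Lemma Vth_ge th s u : dotv (phi s u) th <= Vth Phi th s.
Proof. exact: (le_bigmax _ _ u). Qed.

Lemma Vth_arg th s : exists u, Vth Phi th s = dotv (phi s u) th.
Proof.
rewrite /Vth; elim/big_ind: _; first by exists ord0.
  move=> x y [u ->] [v ->]; rewrite /Num.max; case: ifP => _; by [exists v|exists u].
by move=> u _; exists u.
Qed.

Lemma feat_le_phimax s a : norm2 (phi s a) <= phimax Phi.
Proof.
apply: le_trans (le_bigmax _ _ s); exact: (le_bigmax _ (fun a => norm2 (phi s a)) a).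
Qed.

Lemma phimax_ge0 : 0 <= phimax Phi.
Proof. exact: le_trans (norm2_ge0 _) (feat_le_phimax ord0 ord0). Qed.

Lemma r_le_Rmax s a s' : `|r s a s'| <= Rmax r.
Proof.
apply: le_trans (le_bigmax _ _ s).
apply: le_trans (le_bigmax _ (fun a => \big[Num.max/0]_(s' : S) `|r s a s'|) a).
exact: (le_bigmax _ (fun s' => `|r s a s'|) s').
Qed.

Lemma Rmax_ge0 : 0 <= Rmax r.
Proof. exact: le_trans (normr_ge0 _) (r_le_Rmax ord0 ord0 ord0). Qed.

Variable thstar : 'cV[R]_m.
Definition Bnd (x : 'cV[R]_m) := norminf (Phi *m thstar) + phimax Phi * norm2 x.

Lemma dot_bound th s a : `|dotv (phi s a) th| <= Bnd (th - thstar).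
Proof.
have H : forall x, `|dotv (phi s a) (thstar + x)| <= Bnd x.
  move=> x; rewrite dotvDr; apply: le_trans (ler_normD _ _) _; apply: lerD.
    by rewrite dot_feat; exact: norminf_ge.
  apply: le_trans (dotv_abs _ _) _; apply: ler_wpM2r; [exact: norm2_ge0|exact: feat_le_phimax].
by have := H (th - thstar); rewrite addrC subrK.
Qed.

Lemma Vth_bound th s : `|Vth Phi th s| <= Bnd (th - thstar).
Proof. by have [u ->] := Vth_arg th s; exact: dot_bound. Qed.

Definition delta th s a s' := r s a s' + gamma * Vth Phi th s' - dotv (phi s a) th.

Hypothesis gamma01 : 0 < gamma < 1.

Lemma delta_bound th s a s' :
  `|delta th s a s'| <= Rmax r + (1 + gamma) * Bnd (th - thstar).
Proof.
case/andP: gamma01 => g0 _.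
rewrite /delta mulrDl mul1r addrA addrAC; apply: le_trans (ler_normB _ _) _.
apply: lerD; last exact: dot_bound.
apply: le_trans (ler_normD _ _) _; apply: lerD; first exact: r_le_Rmax.
rewrite normrM (gtr0_norm g0) ler_pM2l //; exact: Vth_bound.
Qed.


Hypothesis P0 : forall s a s', 0 <= P s a s'.
Hypothesis P1 : forall s a, \sum_s' P s a s' = 1.
Hypothesis d0 : forall s a, 0 < d s a.
Hypothesis d1 : \sum_s \sum_a d s a = 1.

Lemma coef_eq th s a : Rexp P r s a + gamma * (\sum_s' P s a s' * Vth Phi th s')
   - dotv (phi s a) th = \sum_s' P s a s' * delta th s a s'.
Proof.
rewrite /delta /Rexp.
have -> : \sum_s' P s a s' * (r s a s' + gamma * Vth Phi th s' - dotv (phi s a) th) =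
  \sum_s' P s a s' * r s a s' + \sum_s' gamma * (P s a s' * Vth Phi th s')
  - (\sum_s' P s a s') * dotv (phi s a) th.
  rewrite mulr_suml -big_split -sumrB /=; apply: eq_bigr => s' _; ring.
by rewrite P1 mul1r -mulr_sumr.
Qed.

Lemma gfun_delta th : gfun P r d Phi gamma th =
  \sum_s \sum_a (d s a * \sum_s' P s a s' * delta th s a s') *: phi s a.
Proof.
by apply: eq_bigr => s _; apply: eq_bigr => a _; rewrite coef_eq.
Qed.

Definition Bd th := Rmax r + (1 + gamma) * Bnd (th - thstar).

Lemma norm2_gfun th : norm2 (gfun P r d Phi gamma th) <= Bd th * phimax Phi.
Proof.
rewrite gfun_delta; apply: le_trans (norm2_sum _ _ _ _) _.
apply: le_trans (_ : _ <= \sum_s \sum_a d s a * (Bd th * phimax Phi)) _; last first.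
  have -> : \sum_s \sum_a d s a * (Bd th * phimax Phi) =
     (\sum_s \sum_a d s a) * (Bd th * phimax Phi).
    by rewrite mulr_suml; apply: eq_bigr => s _; rewrite mulr_suml.
  by rewrite d1 mul1r.
apply: ler_sum => s _; apply: le_trans (norm2_sum _ _ _ _) _; apply: ler_sum => a _.
rewrite norm2Z normrM (gtr0_norm (d0 s a)) -mulrA ler_pM2l //.
apply: ler_pM; [exact: normr_ge0|exact: norm2_ge0| |exact: feat_le_phimax].
apply: le_trans (ler_norm_sum _ _ _) _.
apply: le_trans (_ : _ <= \sum_s' P s a s' * Bd th) _; last by rewrite -mulr_suml P1 mul1r.
apply: ler_sum => s' _; rewrite normrM (ger0_norm (P0 _ _ _)); apply: ler_wpM2l => //.
exact: delta_bound.
Qed.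


Lemma dotv_sumZl (I : finType) (c : I -> R) (u : I -> 'cV[R]_m) x :
  dotv (\sum_i c i *: u i) x = \sum_i c i * dotv (u i) x.
Proof.
rewrite /dotv (eq_bigr (fun k => \sum_i c i * (u i k 0 * x k 0))).
  by rewrite exchange_big; apply: eq_bigr => i _; rewrite mulr_sumr.
by move=> k _; rewrite summxE mulr_suml; apply: eq_bigr => i _; rewrite mxE mulrA.
Qed.

Definition Yv (x : 'cV[R]_m) (v : S -> R) : 'cV[R]_m :=
  x + alpha *: \sum_s \sum_a (d s a * (gamma * (\sum_s' P s a s' * v s') - dotv (phi s a) x))
                 *: phi s a.

Lemma Api_Yv (pi : policy nS nA) x :
  Api P d Phi gamma alpha pi *m x = Yv x (fun s => dotv (phi s (pi s)) x).
Proof.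
rewrite /Api mulmxDl mulmxBl mul1mx -!scalemxAl !mulmx_suml.
set A1 := \sum_s _; set A2 := \sum_s _.
have EA1 : A1 = \sum_s \sum_a (d s a * dotv (phi s a) x) *: phi s a.
  rewrite /A1; apply: eq_bigr => s _; rewrite mulmx_suml; apply: eq_bigr => a _.
  by rewrite -scalemxAl -mulmxA trmx_mul_dot mul_mx_scalar scalerA.
have EA2 : A2 = \sum_s \sum_a (d s a * (\sum_s' P s a s' * dotv (phi s' (pi s')) x)) *: phi s a.
  rewrite /A2; apply: eq_bigr => s _; rewrite mulmx_suml; apply: eq_bigr => a _.
  by rewrite -scalemxAl -mulmxA trmx_mul_dot mul_mx_scalar scalerA dotv_sumZl.
rewrite EA1 EA2 /Yv.
have -> : \sum_s \sum_a (d s a * (gamma * (\sum_s' P s a s' * dotv (phi s' (pi s')) x)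
     - dotv (phi s a) x)) *: phi s a =
   gamma *: \sum_s \sum_a (d s a * (\sum_s' P s a s' * dotv (phi s' (pi s')) x)) *: phi s a
   - \sum_s \sum_a (d s a * dotv (phi s a) x) *: phi s a.
  rewrite scaler_sumr -sumrB; apply: eq_bigr => s _.
  rewrite scaler_sumr -sumrB; apply: eq_bigr => a _.
  by rewrite scalerA -scalerBl; congr (_ *: _); ring.
by rewrite scalerBr scalerA addrA [_ - _ + _]addrC addrA [_ *: _ + x]addrC.
Qed.


Lemma Y_eq th : gfun P r d Phi gamma thstar = 0 ->
  (th - thstar) + alpha *: gfun P r d Phi gamma th =
  Yv (th - thstar) (fun s => Vth Phi th s - Vth Phi thstar s).
Proof.
move=> hg; have -> : gfun P r d Phi gamma th = gfun P r d Phi gamma th - gfun P r d Phi gamma thstar.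
  by rewrite hg subr0.
rewrite /Yv /gfun -sumrB.
congr (_ + _ *: _); apply: eq_bigr => s _; rewrite -sumrB; apply: eq_bigr => a _.
rewrite -scalerBl dotvBr; congr (_ *: _).
have -> : \sum_s' P s a s' * (Vth Phi th s' - Vth Phi thstar s') =
   \sum_s' P s a s' * Vth Phi th s' - \sum_s' P s a s' * Vth Phi thstar s'.
  by rewrite -sumrB; apply: eq_bigr => s' _; rewrite mulrBr.
ring.
Qed.

Lemma Yv_affine x (v1 v2 : S -> R) t :
  Yv x (fun s => t * v1 s + (1 - t) * v2 s) = t *: Yv x v1 + (1 - t) *: Yv x v2.
Proof.
rewrite /Yv !scalerDr !scalerA addrACA -scalerDl.
have -> : t + (1 - t) = 1 by ring.
rewrite scale1r; congr (_ + _).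
rewrite [t * alpha]mulrC [(1 - t) * alpha]mulrC -!scalerA -scalerDr; congr (_ *: _).
rewrite !scaler_sumr -big_split /=; apply: eq_bigr => s _.
rewrite !scaler_sumr -big_split /=; apply: eq_bigr => a _.
rewrite !scalerA -scalerDl; congr (_ *: _).
have -> : \sum_s' P s a s' * (t * v1 s' + (1 - t) * v2 s') =
   t * (\sum_s' P s a s' * v1 s') + (1 - t) * (\sum_s' P s a s' * v2 s').
  rewrite !mulr_sumr -big_split /=; apply: eq_bigr => s' _; ring.
ring.
Qed.

End Step.

Section Vertex.
Variable R : realType.
Variable n : nat.

Lemma vertex (F : ('I_n -> R) -> R) (a b v : 'I_n -> R) :
  (forall v1 v2 t, 0 <= t <= 1 ->
     F (fun s => t * v1 s + (1 - t) * v2 s) <= Num.max (F v1) (F v2)) ->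
  (forall s, b s <= v s <= a s) ->
  exists c : 'I_n -> bool, F v <= F (fun s => if c s then a s else b s).
Proof.
move=> Fc.
suff H : forall k v, (forall s, b s <= v s <= a s) ->
    (forall s : 'I_n, (k <= s)%N -> v s = a s \/ v s = b s) ->
    exists c : 'I_n -> bool, F v <= F (fun s => if c s then a s else b s).
  by move=> hv; apply: (H n v hv) => s; rewrite leqNgt ltn_ord.
elim=> [|k IH] {}v hv hk.
  exists (fun s => v s == a s).
  suff -> : (fun s => if v s == a s then a s else b s) = v by [].
  apply: funext => s; case: eqP => // ne; by case: (hk s (leq0n _)).
have [kn|kn] := ltnP k n; last first.
  apply: IH => // s ks; apply: hk; move: (ltn_ord s) => ?; exfalso.
  by move: (leq_trans (ltn_ord s) kn); rewrite ltnNge ks.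
set s0 := Ordinal kn.
set v1 := fun s => if s == s0 then a s else v s.
set v2 := fun s => if s == s0 then b s else v s.
have hv1 : forall s, b s <= v1 s <= a s.
  move=> s; rewrite /v1; case: eqP => _ //; have /andP[h1 h2] := hv s.
  by rewrite (le_trans h1 h2) lexx.
have hv2 : forall s, b s <= v2 s <= a s.
  move=> s; rewrite /v2; case: eqP => _ //; have /andP[h1 h2] := hv s.
  by rewrite (le_trans h1 h2) lexx.
have hk' : forall w, (forall s, s != s0 -> w s = v s) ->
    (w s0 = a s0 \/ w s0 = b s0) ->
    forall s : 'I_n, (k <= s)%N -> w s = a s \/ w s = b s.
  move=> w hw hw0 s ks; have [->|ne] := eqVneq s s0; first by [].
  rewrite hw //; apply: hk; rewrite ltn_neqAle ks andbT.
  by apply: contra ne => /eqP e; apply/eqP/val_inj; rewrite /= e.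
have [c1 h1] : exists c, F v1 <= F (fun s => if c s then a s else b s).
  apply: IH => //; apply: hk'; first by move=> s /negbTE; rewrite /v1 => ->.
  by left; rewrite /v1 eqxx.
have [c2 h2] : exists c, F v2 <= F (fun s => if c s then a s else b s).
  apply: IH => //; apply: hk'; first by move=> s /negbTE; rewrite /v2 => ->.
  by right; rewrite /v2 eqxx.
have [t t01 vt] : exists2 t, 0 <= t <= 1 & v = fun s => t * v1 s + (1 - t) * v2 s.
  have /andP[hb ha] := hv s0.
  have [eab|nab] := eqVneq (a s0) (b s0).
    exists 1; first by rewrite ler01 lexx.
    apply: funext => s; rewrite /v1 /v2 subrr mul0r addr0 mul1r.
    case: eqP => [->|//]; apply/eqP; rewrite eq_le ha /=; by rewrite eab.
  have ab : 0 < a s0 - b s0 by rewrite subr_gt0 lt_neqAle eq_sym nab (le_trans hb ha).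
  exists ((v s0 - b s0) / (a s0 - b s0)).
    apply/andP; split; first by apply: divr_ge0; rewrite subr_ge0 // (le_trans hb ha).
    by rewrite ler_pdivrMr // mul1r lerB.
  apply: funext => s; rewrite /v1 /v2; case: eqP => [->|_]; last by ring.
  by field; rewrite gt_eqF.
have Fv : F v <= Num.max (F v1) (F v2) by rewrite vt; exact: Fc.
have [le12|le21] := leP (F v1) (F v2).
  by exists c2; apply: le_trans Fv _; rewrite max_r.
by exists c1; apply: le_trans Fv _; rewrite max_l // ltW.
Qed.

End Vertex.

Section Contr.
Variable R : realType.
Variables (nS nA m : nat).
Variables (P : 'I_nS.+1 -> 'I_nA.+1 -> 'I_nS.+1 -> R) (r : 'I_nS.+1 -> 'I_nA.+1 -> 'I_nS.+1 -> R)
  (d : 'I_nS.+1 -> 'I_nA.+1 -> R)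
  (Phi : 'M[R]_(nA.+1 * nS.+1, m)) (gamma alpha : R) (thstar : 'cV[R]_m).
Local Notation S := 'I_nS.+1.
Local Notation phi := (feat Phi).
Local Notation pA := (prodA P d Phi gamma alpha).

Lemma Ycontract th l (pis : l.-tuple (policy nS nA)) :
  gfun P r d Phi gamma thstar = 0 ->
  norm2 (pA pis *m ((th - thstar) + alpha *: gfun P r d Phi gamma th)) ^+ 2
    <= Mx R nS nA m P d Phi gamma alpha l.+1 (th - thstar).
Proof.
move=> hg; rewrite (Y_eq _ _ _ _ _ _ _ _ _ _ _ _ hg).
set x := th - thstar.
pose pt s := sval (cid (Vth_arg R nS nA m Phi th s)).
pose ps s := sval (cid (Vth_arg R nS nA m Phi thstar s)).
pose F := fun v => norm2 (pA pis *m Yv R nS nA m P d Phi gamma alpha x v).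
have box : forall s, dotv (phi s (ps s)) x <= Vth Phi th s - Vth Phi thstar s <= dotv (phi s (pt s)) x.
  move=> s; rewrite /x !dotvBr; apply/andP; split.
    rewrite (svalP (cid (Vth_arg R nS nA m Phi thstar s))) ; apply: lerB => //; exact: (Vth_ge R nS nA m).
  rewrite {1}(svalP (cid (Vth_arg R nS nA m Phi th s))) ; apply: lerB => //; exact: (Vth_ge R nS nA m).
have Fc : forall v1 v2 t, 0 <= t <= 1 ->
    F (fun s => t * v1 s + (1 - t) * v2 s) <= Num.max (F v1) (F v2).
  move=> v1 v2 t /andP[t0 t1]; rewrite /F Yv_affine mulmxDr -!scalemxAr.
  apply: le_trans (norm2D _ _) _; rewrite !norm2Z (ger0_norm t0) ger0_norm ?subr_ge0 //.
  apply: le_trans (_ : _ <= t * Num.max (F v1) (F v2) + (1 - t) * Num.max (F v1) (F v2)) _.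
    by apply: lerD; apply: ler_wpM2l; rewrite ?subr_ge0 // ?le_max lexx ?orbT.
  by rewrite -mulrDl subrKC mul1r.
have [c hc] := vertex _ _ _ _ _ _ Fc box.
pose pi : policy nS nA := [ffun s => if c s then pt s else ps s].
have Evert : (fun s => if c s then dotv (phi s (pt s)) x else dotv (phi s (ps s)) x)
    = (fun s => dotv (phi s (pi s)) x).
  by apply: funext => s; rewrite ffunE; case: (c s).
rewrite Evert /F -Api_Yv mulmxA -prodA_cons in hc.
apply: le_trans (_ : _ <= norm2 (pA [tuple of pi :: pis] *m x) ^+ 2) _.
  by rewrite ler_sqr ?nnegrE ?norm2_ge0.
exact: (le_bigmax _ (fun t : l.+1.-tuple (policy nS nA) => norm2 (pA t *m x) ^+ 2)).
Qed.

End Contr.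

Section OneStep.
Variable R : realType.
Variables (nS nA m : nat).
Variables (P : 'I_nS.+1 -> 'I_nA.+1 -> 'I_nS.+1 -> R) (r : 'I_nS.+1 -> 'I_nA.+1 -> 'I_nS.+1 -> R)
  (d : 'I_nS.+1 -> 'I_nA.+1 -> R)
  (Phi : 'M[R]_(nA.+1 * nS.+1, m)) (gamma alpha : R) (thstar : 'cV[R]_m) (beta C : R).
Local Notation phi := (feat Phi).
Local Notation V := (Vlyap P d Phi gamma alpha beta).
Local Notation p := (plyap P d Phi gamma alpha beta).

Hypothesis gamma01 : 0 < gamma < 1.
Hypothesis alpha01 : 0 < alpha < 1.
Hypothesis P0 : forall s a s', 0 <= P s a s'.
Hypothesis P1 : forall s a, \sum_s' P s a s' = 1.
Hypothesis d0 : forall s a, 0 < d s a.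
Hypothesis d1 : \sum_s \sum_a d s a = 1.
Hypothesis hg : gfun P r d Phi gamma thstar = 0.
Hypothesis beta0 : 0 < beta.
Hypothesis C0 : 0 <= C.
Hypothesis HV : forall x, norm2 x ^+ 2 <= V x <= C * norm2 x ^+ 2.

Lemma Vlow x : norm2 x ^+ 2 <= V x.
Proof. by case/andP: (HV x). Qed.

Lemma p_le x : p x <= Num.sqrt C * norm2 x.
Proof.
rewrite /plyap -[norm2 x]ger0_norm ?norm2_ge0 // -sqrtr_sqr -sqrtrM //.
by apply: ler_wsqrtr; case/andP: (HV x).
Qed.

Lemma norm2_le_p x : norm2 x <= p x.
Proof.
rewrite /plyap -[norm2 x]ger0_norm ?norm2_ge0 // -sqrtr_sqr.
by apply: ler_wsqrtr; exact: Vlow.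
Qed.

Lemma p_ge0 x : 0 <= p x.
Proof. exact: sqrtr_ge0. Qed.

Lemma p_triangle x y : p (x + y) <= p x + p y.
Proof. exact: (triangle R nS nA m P d Phi gamma alpha beta Vlow). Qed.

Lemma p_Y th : p ((th - thstar) + alpha *: gfun P r d Phi gamma th) <= beta * p (th - thstar).
Proof.
have h := contract R nS nA m P d Phi gamma alpha beta Vlow (th - thstar)
   ((th - thstar) + alpha *: gfun P r d Phi gamma th) beta0
   (fun l pis => Ycontract R nS nA m P r d Phi gamma alpha thstar th l pis hg).
rewrite /plyap.
have -> : beta * Num.sqrt (V (th - thstar)) = Num.sqrt (beta ^+ 2 * V (th - thstar)).
  by rewrite sqrtrM ?sqr_ge0 // sqrtr_sqr ger0_norm // ltW.
apply: ler_wsqrtr; exact: h.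
Qed.

Lemma step th (w : sample nS nA) :
  p (qstep r Phi gamma alpha th w - thstar) <=
  (beta + 2 * alpha * Num.sqrt C * (1 + gamma) * phimax Phi ^+ 2) * p (th - thstar)
  + 2 * alpha * Num.sqrt C * phimax Phi * (Rmax r + (1 + gamma) * norminf (Phi *m thstar)).
Proof.
case/andP: alpha01 => a0 a1; case/andP: gamma01 => g0 g1.
case: w => [[s a] s'] /=.
set x := th - thstar.
have -> : th + (alpha * (r s a s' + gamma * Vth Phi th s' - dotv (phi s a) th)) *: phi s a - thstar
   = (x + alpha *: gfun P r d Phi gamma th) +
     alpha *: (delta R nS nA m r Phi gamma th s a s' *: phi s a - gfun P r d Phi gamma th).
  rewrite /x /delta scalerBr -scalerA; set g := _ *: gfun _ _ _ _ _ _; set u := _ *: (_ *: _).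
  by rewrite [RHS]addrA (addrAC _ g u) addrK addrAC.
apply: le_trans (p_triangle _ _) _.
have hB := norm2_gfun R nS nA m P r d Phi gamma thstar gamma01 P0 P1 d0 d1 th.
have hd := delta_bound R nS nA m r Phi gamma thstar gamma01 th s a s'.
have hph := feat_le_phimax R nS nA m Phi s a.
have hp0 := phimax_ge0 R nS nA m Phi.
have hR0 := Rmax_ge0 R nS nA r.
have hN0 := norminf_ge0 R _ (Phi *m thstar).
set B := Bd R nS nA m r Phi gamma thstar th in hB hd.
have hn : norm2 (alpha *: (delta R nS nA m r Phi gamma th s a s' *: phi s a
            - gfun P r d Phi gamma th)) <= alpha * (2 * (B * phimax Phi)).
  rewrite norm2Z (gtr0_norm a0) ler_pM2l // mulr_natl mulr2n.
  apply: le_trans (norm2D _ _) _; rewrite norm2N; apply: lerD => //.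
  by rewrite norm2Z; apply: ler_pM => //; rewrite ?normr_ge0 ?norm2_ge0.
have hB2 : B <= Rmax r + (1 + gamma) * norminf (Phi *m thstar) + (1 + gamma) * phimax Phi * p x.
  rewrite /B /Bd /Bnd mulrDr addrA -mulrA lerD2l; apply: ler_wpM2l.
    by rewrite addr_ge0 // ltW.
  by apply: ler_wpM2l => //; exact: norm2_le_p.
have := p_Y th; rewrite -/x => hY.
have hpx := p_ge0 x.
have hsC := sqrtr_ge0 C.
set Kc := Rmax r + (1 + gamma) * norminf (Phi *m thstar) in hB2 *.
apply: le_trans (lerD hY (p_le _)) _.
apply: le_trans (_ : _ <= beta * p x + Num.sqrt C * (alpha * (2 * (B * phimax Phi)))) _.
  by rewrite lerD2l ler_wpM2l.
have : Num.sqrt C * (alpha * (2 * (B * phimax Phi))) <=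
   Num.sqrt C * (alpha * (2 * ((Kc + (1 + gamma) * phimax Phi * p x) * phimax Phi))).
  apply: ler_wpM2l => //; apply: ler_wpM2l; first exact: ltW.
  apply: ler_wpM2l => //; exact: ler_wpM2r.
move=> h; apply: le_trans (lerD (lexx _) h) _.
by rewrite le_eqVlt; apply/orP; left; apply/eqP; ring.
Qed.

End OneStep.

Section Expect.
Variable R : realType.

Lemma sum_tuple_prod (T : finType) (f : T -> R) k :
  \sum_(ws : k.-tuple T) \prod_(i < k) f (tnth ws i) = (\sum_t f t) ^+ k.
Proof.
have -> : (\sum_t f t) ^+ k = \prod_(i < k) \sum_t f t by rewrite prodr_const card_ord.
rewrite bigA_distr_bigA /=.
rewrite (reindex (fun g : {ffun 'I_k -> T} => [tuple g i | i < k])) /=.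
  by apply: eq_bigr => g _; apply: eq_bigr => i _; rewrite tnth_mktuple.
exists (fun t => [ffun i => tnth t i]) => [g _ | t _].
  by apply/ffunP => i; rewrite ffunE tnth_mktuple.
by apply: eq_from_tnth => i; rewrite tnth_mktuple ffunE.
Qed.

Variables (nS nA m : nat).
Variables (P : 'I_nS.+1 -> 'I_nA.+1 -> 'I_nS.+1 -> R) (r : 'I_nS.+1 -> 'I_nA.+1 -> 'I_nS.+1 -> R)
  (d : 'I_nS.+1 -> 'I_nA.+1 -> R)
  (Phi : 'M[R]_(nA.+1 * nS.+1, m)) (gamma alpha : R).
Hypothesis P0 : forall s a s', 0 <= P s a s'.
Hypothesis P1 : forall s a, \sum_s' P s a s' = 1.
Hypothesis d0 : forall s a, 0 < d s a.
Hypothesis d1 : \sum_s \sum_a d s a = 1.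

Lemma sp_ge0 w : 0 <= sample_prob P d w.
Proof. by rewrite /sample_prob mulr_ge0 // ltW. Qed.

Lemma sp_sum : \sum_w sample_prob P d w = 1.
Proof.
rewrite -(pair_bigA _ (fun sa s' => sample_prob P d (sa, s'))) /=.
rewrite -(pair_bigA _ (fun s a => \sum_s' sample_prob P d ((s, a), s'))) /=.
rewrite -d1; apply: eq_bigr => s _; apply: eq_bigr => a _.
by rewrite /sample_prob /= -mulr_sumr P1 mulr1.
Qed.

Lemma Eiter_le th0 k (f : 'cV[R]_m -> R) B :
  (forall ws : k.-tuple (sample nS nA), f (qiter r Phi gamma alpha th0 ws) <= B) ->
  Eiter P r d Phi gamma alpha th0 k f <= B.
Proof.
move=> hf; rewrite /Eiter.
apply: le_trans (_ : _ <= \sum_(ws : k.-tuple (sample nS nA))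
    (\prod_(i < k) sample_prob P d (tnth ws i)) * B) _.
  apply: ler_sum => ws _; apply: ler_wpM2l => //.
  by apply: prodr_ge0 => i _; exact: sp_ge0.
by rewrite -mulr_suml sum_tuple_prod sp_sum expr1n mul1r.
Qed.


Lemma opnorm2_ub (p q : nat) (M : 'M[R]_(p, q)) :
  has_ubound [set norm2 (M *m x) | x in [set x : 'cV[R]_q | norm2 x <= 1]].
Proof.
set c := Num.sqrt (\sum_i norm2 (row i M)^T ^+ 2).
have hc : forall x, norm2 (M *m x) <= c * norm2 x.
  move=> x; rewrite /c -[norm2 x]ger0_norm ?norm2_ge0 // -sqrtr_sqr -sqrtrM; last first.
    by apply: sumr_ge0 => i _; exact: sqr_ge0.
  apply: ler_wsqrtr; rewrite mulr_suml; apply: ler_sum => i _.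
  have -> : (M *m x) i 0 = dotv (row i M)^T x.
    by rewrite mxE /dotv; apply: eq_bigr => k _; rewrite !mxE.
  rewrite -exprMn -real_normK ?num_real // ler_sqr ?nnegrE ?normr_ge0 ?mulr_ge0 ?norm2_ge0 //.
  exact: dotv_abs.
exists c => _ [x /= hx <-]; apply: le_trans (hc x) _.
by rewrite -{2}(mulr1 c) ler_wpM2l // sqrtr_ge0.
Qed.

Lemma opnorm2_ge0 (p q : nat) (M : 'M[R]_(p, q)) : 0 <= opnorm2 M.
Proof.
have h0 : [set norm2 (M *m x) | x in [set x : 'cV[R]_q | norm2 x <= 1]]
    (norm2 (M *m (0 : 'cV[R]_q))).
  by exists 0 => //=; rewrite norm2_0 ler01.
by have := ub_le_sup (opnorm2_ub _ _ M) h0; rewrite mulmx0 norm2_0.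
Qed.

Lemma opnorm2_bound (p q : nat) (M : 'M[R]_(p, q)) z :
  norm2 (M *m z) <= opnorm2 M * norm2 z.
Proof.
set c := Num.sqrt (\sum_i norm2 (row i M)^T ^+ 2).
have hc : forall x, norm2 (M *m x) <= c * norm2 x.
  move=> x; rewrite /c -[norm2 x]ger0_norm ?norm2_ge0 // -sqrtr_sqr -sqrtrM; last first.
    by apply: sumr_ge0 => i _; exact: sqr_ge0.
  apply: ler_wsqrtr; rewrite mulr_suml; apply: ler_sum => i _.
  have -> : (M *m x) i 0 = dotv (row i M)^T x.
    by rewrite mxE /dotv; apply: eq_bigr => k _; rewrite !mxE.
  rewrite -exprMn -real_normK ?num_real // ler_sqr ?nnegrE ?normr_ge0 ?mulr_ge0 ?norm2_ge0 //.
  exact: dotv_abs.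
have ub : has_ubound [set norm2 (M *m x) | x in [set x : 'cV[R]_q | norm2 x <= 1]].
  exists c => _ [x /= hx <-]; apply: le_trans (hc x) _.
  by rewrite -{2}(mulr1 c) ler_wpM2l // sqrtr_ge0.
have hs := ub_le_sup ub.
have [->|nz] := eqVneq z 0.
  by rewrite mulmx0 !norm2_0 mulr0.
have n0 : 0 < norm2 z.
  rewrite lt_neqAle norm2_ge0 andbT eq_sym; apply/eqP => h.
  by move: nz; rewrite (norm2_eq0 _ h) eqxx.
have ni : 0 <= (norm2 z)^-1 by rewrite invr_ge0 ltW.
have := hs (norm2 (M *m ((norm2 z)^-1 *: z))).
rewrite -scalemxAr norm2Z (ger0_norm ni) => h.
rewrite -ler_pdivrMr // mulrC; apply: h; exists ((norm2 z)^-1 *: z) => //=.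
  by rewrite norm2Z (ger0_norm ni) mulVf // gt_eqF.
by rewrite -scalemxAr norm2Z (ger0_norm ni).
Qed.

End Expect.

Lemma limn_ge0 (R : realType) (u : nat -> R) : (forall n, 0 <= u n) -> 0 <= limn u.
Proof.
move=> u0. have [cu|ncu] := pselect (cvgn u).
  by apply: limr_ge => //; apply: nearW.
by rewrite (dvgP ncu).
Qed.


End Helpers.
Import Helpers.
Import numFieldNormedType.Exports.


Theorem theorem3 (R : realType) (nS nA m : nat)
  (P : 'I_nS.+1 -> 'I_nA.+1 -> 'I_nS.+1 -> R)
  (r : 'I_nS.+1 -> 'I_nA.+1 -> 'I_nS.+1 -> R)
  (d : 'I_nS.+1 -> 'I_nA.+1 -> R)
  (Phi : 'M[R]_(nA.+1 * nS.+1, m))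
  (gamma alpha : R)
  (thstar th0 : 'cV[R]_m) (eps C : R) :
  0 < gamma < 1 ->
  0 < alpha < 1 ->
  (forall s a s', 0 <= P s a s') ->
  (forall s a, \sum_s' P s a s' = 1) ->
  (forall s a, 0 < d s a) ->
  \sum_s \sum_a d s a = 1 ->
  row_full Phi ->
  rho_dir P d Phi gamma alpha < 1 ->
  gfun P r d Phi gamma thstar = 0 ->
  0 < eps ->
  rho_dir P d Phi gamma alpha + eps < 1 ->
  1 <= C ->
  (forall x, norm2 x ^+ 2 <= Vlyap P d Phi gamma alpha (rho_dir P d Phi gamma alpha + eps) x
             <= C * norm2 x ^+ 2) ->
  let beta := rho_dir P d Phi gamma alpha + eps in
  let lambda := beta + 2 * alpha * Num.sqrt C * (1 + gamma) * phimax Phi ^+ 2 in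
  lambda < 1 ->
  let K := 2 * alpha * Num.sqrt C * phimax Phi *
           (Rmax r + (1 + gamma) * norminf (Phi *m thstar)) in
  let Ek := Eiter P r d Phi gamma alpha th0 in
  (forall k : nat,
     Ek k (fun th => plyap P d Phi gamma alpha beta (th - thstar))
       <= lambda ^+ k * plyap P d Phi gamma alpha beta (th0 - thstar)
          + K / (1 - lambda) * (1 - lambda ^+ k)) /\
  (forall k : nat,
     Ek k (fun th => norm2 (th - thstar))
       <= Num.sqrt C * lambda ^+ k * norm2 (th0 - thstar) + K / (1 - lambda)) /\
  (limn_esup (fun k : nat => (Ek k (fun th => norm2 (th - thstar)))%:E)
     <= (K / (1 - lambda))%:E)%E /\
  (forall k : nat,
     Ek k (fun th => norm2 (Phi *m th - Phi *m thstar))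
       <= opnorm2 Phi * (Num.sqrt C * lambda ^+ k * norm2 (th0 - thstar)
                         + K / (1 - lambda))).
Proof.
Local Open Scope classical_set_scope.
move=> /andP[g0 g1] /andP[a0 a1] P0 P1 d0 d1 _ rho1 hg e0 b1 C1 HV beta lambda lam1 K Ek.
have rho0 : 0 <= rho_dir P d Phi gamma alpha.
  by rewrite /rho_dir; apply: limn_ge0 => k; exact: powR_ge0.
have beta0 : 0 < beta by rewrite /beta ltr_wpDl.
have hp0 := phimax_ge0 R nS nA m Phi.
have hR0 := Rmax_ge0 R nS nA r.
have hN0 := norminf_ge0 R _ (Phi *m thstar).
have hsC := sqrtr_ge0 C.
have C0 : 0 <= C by apply: le_trans C1; exact: ler01.
have extra0 : 0 <= 2 * alpha * Num.sqrt C * (1 + gamma) * phimax Phi ^+ 2.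
  by do ! (apply: mulr_ge0 || apply: addr_ge0); rewrite ?ler01 // ltW.
have lam0 : 0 < lambda by rewrite /lambda ltr_wpDr.
have K0 : 0 <= K by rewrite /K; do ! (apply: mulr_ge0 || apply: addr_ge0); rewrite ?ler01 // ltW.
have lam1' : 0 < 1 - lambda by rewrite subr_gt0.
pose p := plyap P d Phi gamma alpha beta.
have step1 : forall th w, p (qstep r Phi gamma alpha th w - thstar) <= lambda * p (th - thstar) + K.
  move=> th w; exact: (step R nS nA m P r d Phi gamma alpha thstar beta C
     (andb_true_intro (conj g0 g1)) (andb_true_intro (conj a0 a1)) P0 P1 d0 d1 hg beta0 C0 HV th w).
have path : forall ws : seq (sample nS nA),
    p (qiter r Phi gamma alpha th0 ws - thstar) <=
    lambda ^+ size ws * p (th0 - thstar) + K / (1 - lambda) * (1 - lambda ^+ size ws).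
  elim/last_ind => [|s w IH].
    by rewrite /qiter /= expr0 mul1r subrr mulr0 addr0.
  rewrite /qiter foldl_rcons size_rcons -/(qiter r Phi gamma alpha th0 s).
  apply: le_trans (step1 _ _) _.
  apply: le_trans (lerD (ler_wpM2l (ltW lam0) IH) (lexx K)) _.
  rewrite le_eqVlt; apply/orP; left; apply/eqP; rewrite exprS; field.
  by rewrite gt_eqF.
have pnorm : forall x, norm2 x <= p x.
  exact: (norm2_le_p R nS nA m P d Phi gamma alpha beta C HV).
have pC : forall x, p x <= Num.sqrt C * norm2 x.
  exact: (p_le R nS nA m P d Phi gamma alpha beta C C0 HV).
have bound2 : forall k (ws : k.-tuple (sample nS nA)),
    norm2 (qiter r Phi gamma alpha th0 ws - thstar) <=
    Num.sqrt C * lambda ^+ k * norm2 (th0 - thstar) + K / (1 - lambda).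
  move=> k ws; apply: le_trans (pnorm _) _; apply: le_trans (path ws) _.
  rewrite size_tuple; apply: lerD.
    rewrite [X in _ <= X]mulrAC [X in _ <= X]mulrC; apply: ler_wpM2l; [exact: exprn_ge0 (ltW lam0)|exact: pC].
  rewrite -[X in _ <= X]mulr1; apply: ler_wpM2l; first by rewrite divr_ge0 // ltW.
  by rewrite gerBl exprn_ge0 // ltW.
have EL := Eiter_le R nS nA m P r d Phi gamma alpha P0 P1 d0 d1 th0.
split.
  move=> k; apply: EL => ws; have := path ws; by rewrite size_tuple.
split; first by move=> k; apply: EL => ws; exact: bound2.
split; last first.
  move=> k; apply: EL => ws; rewrite -mulmxBr.
  apply: le_trans (opnorm2_bound R _ _ Phi _) _.
  by apply: ler_wpM2l; [exact: opnorm2_ge0|exact: bound2].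
have hu : forall k, Ek k (fun th => norm2 (th - thstar)) <=
    Num.sqrt C * lambda ^+ k * norm2 (th0 - thstar) + K / (1 - lambda).
  by move=> k; apply: EL => ws; exact: bound2.
set L := K / (1 - lambda) in hu *.
set v := fun k => Num.sqrt C * lambda ^+ k * norm2 (th0 - thstar) + L.
have h1 : (fun k => lambda ^+ k) @ \oo --> 0.
  by apply: cvg_expr; rewrite gtr0_norm.
have H := cvgD (cvgM (cvgM (cvg_cst (Num.sqrt C)) h1) (cvg_cst (norm2 (th0 - thstar)))) (cvg_cst L).
rewrite mulr0 mul0r add0r in H.
have hv : (fun k => (v k)%:E) @ \oo --> L%:E.
  by apply: cvg_EFin; [exact: nearW|exact: H].
rewrite limn_esup_lim.
apply: (@le_trans _ _ (limn (esups (fun k => (v k)%:E)))).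
  apply: lee_lim; [exact: is_cvg_esups|exact: is_cvg_esups|apply: nearW => n].
  apply: ge_ereal_sup => _ [k /= nk <-].
  apply: (@le_trans _ _ (v k)%:E); first by rewrite lee_fin; exact: hu.
  by apply: ereal_sup_ubound; exists k.
by rewrite -limn_esup_lim (cvg_limn_einf_sup hv).2.
Qed.
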